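(* Let $p(g\mid\mathbf w)=\sum_{k\in\mathcal A}\theta_kP_{(k)}(w_{-k},g)$ be an imitation kernel on a finite set $G$ with $\gcd(\mathcal A)=1$. If the $G$-stochastic function $P_{(\cdot)}$ is irreducible but its common period $\hat d$ satisfies $\hat d>1$, then $|\mathcal G(p)|>1$.
   Context: $\mathcal A\subset\mathbb N_+$, $\theta$ a probability on $\mathcal A$ with $\theta_k>0$ for $k\in\mathcal A$, $P_{(k)}$ stochastic matrices on $G$, $\mathbf w=(w_{-1},w_{-2},\dots)$. Compatibility: a law of $(X_n)_{n\in\mathbb Z}$ on $G^{\mathbb Z}$ is compatible with $p$ if $P(X_n=g\mid X_{n-1},X_{n-2},\dots)=p(g\mid X_{n-1},X_{n-2},\dots)$ a.s. for all $n,g$; $\mathcal G(p)$ is the set of compatible laws. Words $\mathcal A^*=\bigcup_{n\ge1}\mathcal A^n$, $P_{\mathbf a}=P_{(a_n)}\cdots P_{(a_1)}$, depth $s(\mathbf a)=\sum a_i$. Irreducible: for all $i,j$ some word has $P_{\mathbf a}(i,j)>0$. Period of $i$: $d_i=\gcd\{s(\mathbf a):P_{\mathbf a}(i,i)>0\}$; under irreducibility and $\gcd(\mathcal A)=1$ all $d_i$ equal a common value $\hat d$. *)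

(* Defs.v *)
From Stdlib Require Import Reals Arith List ZArith.
Open Scope R_scope.

(** Finite state space [G] is given by an exhaustive duplicate-free list [eG]
    together with decidable equality [eqG]. *)

Definition sumL {X : Type} (f : X -> R) (l : list X) : R :=
  fold_right (fun x acc => f x + acc) 0 l.

Definition ind (b : bool) : R := if b then 1 else 0.

Fixpoint words {G : Type} (eG : list G) (M : nat) : list (list G) :=
  match M with
  | O => nil :: nil
  | S M' => flat_map (fun w => map (fun g => g :: w) eG) (words eG M')
  end.

Definition isAt {G : Type} (eqG : forall x y : G, {x = y} + {x <> y})
  (w : list G) (i : nat) (g : G) : R :=
  match nth_error w i with
  | Some x => if eqG x g then 1 else 0
  | None => 0
  end.

(** Matrix product along a word: [matw P eG a] is
    P_a = P_(a_n) ... P_(a_1) for a = [a_1; ...; a_n]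
    (the empty word gives the identity, but only nonempty words are used). *)
Fixpoint matw {G : Type} (eqG : forall x y : G, {x = y} + {x <> y})
  (eG : list G) (P : nat -> G -> G -> R) (a : list nat) (i j : G) : R :=
  match a with
  | nil => if eqG i j then 1 else 0
  | a1 :: rest => sumL (fun h => matw eqG eG P rest i h * P a1 h j) eG
  end.

Definition depth (a : list nat) : nat := fold_right Nat.add 0%nat a.

Definition isGcdSet (S : nat -> Prop) (d : nat) : Prop :=
  (forall s, S s -> Nat.divide d s) /\
  (forall d', (forall s, S s -> Nat.divide d' s) -> Nat.divide d' d).

Definition isWord (A : nat -> Prop) (a : list nat) : Prop :=
  a <> nil /\ Forall A a.

Definition Irreducible {G : Type} eqG (eG : list G) (A : nat -> Prop)
  (P : nat -> G -> G -> R) : Prop :=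
  forall i j : G, exists a, isWord A a /\ matw eqG eG P a i j > 0.

Definition returnDepths {G : Type} eqG (eG : list G) (A : nat -> Prop)
  (P : nat -> G -> G -> R) (i : G) (s : nat) : Prop :=
  exists a, isWord A a /\ matw eqG eG P a i i > 0 /\ depth a = s.

Definition isPeriod {G : Type} eqG (eG : list G) A P (i : G) (d : nat) : Prop :=
  isGcdSet (returnDepths eqG eG A P i) d.

(** A law of (X_n)_{n in Z} on G^Z, given through its finite-dimensional
    distributions: [mu m w] = P(X_m = w_0, ..., X_{m+|w|-1} = w_{|w|-1}).
    By Kolmogorov's extension theorem (G finite) such consistent families
    are in bijection with probability measures on G^Z. *)
Definition IsLaw {G : Type} (eG : list G) (mu : Z -> list G -> R) : Prop :=
  (forall m, mu m nil = 1) /\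
  (forall m w, 0 <= mu m w) /\
  (forall m w, sumL (fun g => mu m (w ++ g :: nil)) eG = mu m w) /\
  (forall m w, sumL (fun g => mu (m - 1)%Z (g :: w)) eG = mu m w).

Definition expect {G : Type} (eG : list G) (mu : Z -> list G -> R)
  (m : Z) (M : nat) (f : list G -> R) : R :=
  sumL (fun w => mu m w * f w) (words eG M).

(** Compatibility of the law [mu] with the imitation kernel
    p(g | w) = sum_{k in A} theta_k P_(k)(w_{-k}, g):
    for every n, every event B = {(X_{n-L},...,X_{n-1}) in b} of the past and
    every g,
      E[1{X_n = g} 1_B] = E[p(g | X_{n-1}, X_{n-2}, ...) 1_B]
                        = sum_k theta_k sum_h P_(k)(h,g) P(X_{n-k} = h, B).
    Such events form a pi-system generating the past sigma-algebra, so this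
    is exactly P(X_n = g | past) = p(g | past) a.s. *)
Definition Compatible {G : Type} eqG (eG : list G) (theta : nat -> R)
  (P : nat -> G -> G -> R) (mu : Z -> list G -> R) : Prop :=
  forall (n : Z) (L : nat) (b : list G -> bool) (g : G),
    infinite_sum
      (fun k => theta k *
         sumL (fun h => P k h g *
           expect eG mu (n - Z.of_nat (L + k))%Z (L + k)
             (fun w => ind (b (skipn k w)) * isAt eqG w L h)) eG)
      (expect eG mu (n - Z.of_nat L)%Z (L + 1)
         (fun w => ind (b (firstn L w)) * isAt eqG w L g)).

(* Main.v *)
Require Import Defs.
From Stdlib Require Import Reals Arith List ZArith.
Open Scope R_scope.

Module CluOuter.
From HB Require Import structures.
From mathcomp Require Import all_boot all_order all_algebra.
From mathcomp Require Import all_classical all_reals all_analysis.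
From mathcomp Require Import Rstruct Rstruct_topology.
Import Order.TTheory GRing.Theory Num.Theory.
Import numFieldNormedType.Exports.
Local Open Scope classical_set_scope.

Module CluM.
Import ArrowAsProduct.

Lemma cluster_exists (I0 : Type) (f : nat -> I0 -> R)
  (Hb : forall n i, Rle 0 (f n i) /\ Rle (f n i) 1) :
  exists mu : I0 -> R, forall (cs : list I0) (eps : R), Rlt 0 eps -> forall N0 : nat,
    exists N : nat, (N0 <= N)%coq_nat /\ forall c, List.In c cs -> Rlt (Rabs (Rminus (f N c) (mu c))) eps.
Proof.
pose I := {classic I0}.
pose K : set {ptws I -> R} := [set g | forall i : I, `[0%R, 1%R] (g i)].
have cK : compact K.
  have := (@tychonoff I (fun=> R) (fun=> `[0%R,1%R]) (fun=> @segment_compact R 0%R 1%R)). exact.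
pose F := (fun n => (f n : {ptws I -> R})) @ \oo.
have PF : ProperFilter F by exact: fmap_proper_filter.
have FK : F K.
  exists 0%N => // n _ i /=; rewrite /= in_itv /=; have [h1 h2] := Hb n i.
  by apply/andP; split; apply/RleP.
have [mu [_ cmu]] := cK F PF FK.
exists mu => cs eps epos N0.
pose B : set {ptws I -> R} := [set g | forall c, List.In c cs -> Rlt (Rabs (Rminus (g c) (mu c))) eps].
have nb : forall c : I, nbhs (mu c) [set y : R | Rlt (Rabs (Rminus y (mu c))) eps].
  move=> c; apply/nbhs_ballP; exists eps => /=; first exact/RltP.
  by move=> y /RltP; rewrite /= Rabs_minus_sym.
have nB : nbhs mu B.
  rewrite /B; clear B; elim: cs => [|c cs IH].
    apply: (@filterS _ (nbhs (mu : {ptws I -> R})) _ setT); first by move=> g _ c [].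
    exact: filterT.
  have h1 : nbhs mu (proj c @^-1` [set y : R | Rlt (Rabs (Rminus y (mu c))) eps]).
    have := @proj_continuous I (fun=> R) c mu; move=> /(_ _ (nb c)); exact.
  apply: filterS (filterI h1 IH) => g [g1 g2] c' /= [<-|]; first exact: g1.
  exact: g2.
have FA : F [set g | exists N, (N0 <= N)%coq_nat /\ g = f N].
  exists N0 => // n /= Hn; exists n; split => //; exact/ssrnat.leP.
have [g [[N [HN ->]] HB]] := cmu _ _ FA nB.
by exists N.
Qed.
End CluM.
End CluOuter.

Global Set Bullet Behavior "Strict Subproofs".
From Stdlib Require Import Lia Lra ClassicalEpsilon Classical FunctionalExtensionality.
Open Scope R_scope.

Section SumL.
Context {X : Type}.

Lemma sumL_nil (f : X -> R) : sumL f nil = 0.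
Proof. reflexivity. Qed.

Lemma sumL_cons (f : X -> R) x l : sumL f (x :: l) = f x + sumL f l.
Proof. reflexivity. Qed.

Lemma sumL_app (f : X -> R) l1 l2 : sumL f (l1 ++ l2) = sumL f l1 + sumL f l2.
Proof. induction l1; simpl; [lra|]. unfold sumL in *; simpl. rewrite IHl1. lra. Qed.

Lemma sumL_ext_in (f g : X -> R) l : (forall x, In x l -> f x = g x) -> sumL f l = sumL g l.
Proof.
  induction l; intros H; simpl; [reflexivity|].
  unfold sumL in *; simpl. rewrite H by (left; auto). rewrite IHl; auto.
  intros; apply H; right; auto.
Qed.

Lemma sumL_ext (f g : X -> R) l : (forall x, f x = g x) -> sumL f l = sumL g l.
Proof. intros; apply sumL_ext_in; auto. Qed.

Lemma sumL_plus (f g : X -> R) l : sumL (fun x => f x + g x) l = sumL f l + sumL g l.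
Proof. induction l; unfold sumL in *; simpl; [lra|]. rewrite IHl; lra. Qed.

Lemma sumL_minus (f g : X -> R) l : sumL (fun x => f x - g x) l = sumL f l - sumL g l.
Proof. induction l; unfold sumL in *; simpl; [lra|]. rewrite IHl; lra. Qed.

Lemma sumL_scal_l (c : R) (f : X -> R) l : sumL (fun x => c * f x) l = c * sumL f l.
Proof. induction l; unfold sumL in *; simpl; [lra|]. rewrite IHl; lra. Qed.

Lemma sumL_scal_r (c : R) (f : X -> R) l : sumL (fun x => f x * c) l = sumL f l * c.
Proof. induction l; unfold sumL in *; simpl; [lra|]. rewrite IHl; lra. Qed.

Lemma sumL_zero (l : list X) : sumL (fun _ => 0) l = 0.
Proof. induction l; unfold sumL in *; simpl; [lra|]. rewrite IHl; lra. Qed.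

Lemma sumL_nonneg (f : X -> R) l : (forall x, In x l -> 0 <= f x) -> 0 <= sumL f l.
Proof.
  induction l; intros H; unfold sumL in *; simpl; [lra|].
  assert (0 <= f a) by (apply H; left; auto).
  assert (0 <= fold_right (fun x acc => f x + acc) 0 l) by (apply IHl; intros; apply H; right; auto).
  lra.
Qed.

Lemma sumL_le (f g : X -> R) l : (forall x, In x l -> f x <= g x) -> sumL f l <= sumL g l.
Proof.
  intros H. assert (0 <= sumL (fun x => g x - f x) l) by (apply sumL_nonneg; intros; specialize (H x H0); lra).
  rewrite sumL_minus in H0; lra.
Qed.

Lemma sumL_ge_term (f : X -> R) l x : (forall y, In y l -> 0 <= f y) -> In x l -> f x <= sumL f l.
Proof.
  induction l; intros H Hx; [destruct Hx|]. unfold sumL in *; simpl in *.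
  destruct Hx as [<-|Hx].
  - assert (0 <= fold_right (fun x acc => f x + acc) 0 l) by (apply (sumL_nonneg f l); intros; apply H; right; auto). lra.
  - assert (f x <= fold_right (fun x acc => f x + acc) 0 l) by (apply IHl; auto).
    assert (0 <= f a) by (apply H; left; auto). lra.
Qed.

Lemma sumL_nz_exists (f : X -> R) l : sumL f l <> 0 -> exists x, In x l /\ f x <> 0.
Proof.
  induction l; unfold sumL in *; simpl; intros H; [lra|].
  destruct (Req_dec (f a) 0) as [E|E].
  - destruct IHl as [x [Hx Hf]]; [rewrite E in H; lra|]. exists x; auto.
  - exists a; auto.
Qed.

Lemma Rabs_sumL_le (f : X -> R) l : Rabs (sumL f l) <= sumL (fun x => Rabs (f x)) l.
Proof.
  induction l; unfold sumL in *; simpl. rewrite Rabs_R0; lra.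
  eapply Rle_trans; [apply Rabs_triang|]. lra.
Qed.
End SumL.

Lemma sumL_map {X Y : Type} (f : Y -> R) (g : X -> Y) l : sumL f (map g l) = sumL (fun x => f (g x)) l.
Proof. induction l; unfold sumL in *; simpl; [lra|]. rewrite IHl; lra. Qed.

Lemma sumL_flat_map {X Y : Type} (f : Y -> R) (g : X -> list Y) l :
  sumL f (flat_map g l) = sumL (fun x => sumL f (g x)) l.
Proof. induction l; cbn [flat_map]; [reflexivity|]. rewrite sumL_app, IHl. reflexivity. Qed.

Lemma sumL_swap {X Y : Type} (f : X -> Y -> R) l1 l2 :
  sumL (fun x => sumL (fun y => f x y) l2) l1 = sumL (fun y => sumL (fun x => f x y) l1) l2.
Proof.
  induction l1.
  - rewrite sumL_nil. symmetry. apply sumL_zero.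
  - rewrite sumL_cons, IHl1, <- sumL_plus. reflexivity.
Qed.


Lemma sumL_delta {G : Type} (eqG : forall x y : G, {x = y} + {x <> y}) (l : list G) (a : G) (F : G -> R) :
  NoDup l -> In a l -> sumL (fun g => (if eqG a g then 1 else 0) * F g) l = F a.
Proof.
  induction l; intros Hnd Hin; [destruct Hin|]. inversion Hnd; subst.
  rewrite sumL_cons. destruct Hin as [<-|Hin].
  - destruct (eqG a0 a0) as [_|n]; [|congruence].
    rewrite (sumL_ext_in _ (fun _ => 0)). rewrite sumL_zero; lra.
    intros x Hx. destruct (eqG a0 x); [subst; contradiction|lra].
  - destruct (eqG a a0) as [->|_]; [contradiction|]. rewrite IHl; auto. lra.
Qed.

Lemma sumL_delta' {G : Type} (eqG : forall x y : G, {x = y} + {x <> y}) (l : list G) (a : G) (F : G -> R) :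
  NoDup l -> In a l -> sumL (fun g => (if eqG g a then 1 else 0) * F g) l = F a.
Proof.
  intros. rewrite <- (sumL_delta eqG l a F); auto. apply sumL_ext; intros g.
  destruct (eqG g a), (eqG a g); subst; try congruence; lra.
Qed.

Lemma sumL_seq_f_R0 (f : nat -> R) n : sumL f (seq 0 (S n)) = sum_f_R0 f n.
Proof.
  induction n. unfold sumL; simpl; lra.
  rewrite seq_S, sumL_app, IHn. simpl. unfold sumL; simpl. lra.
Qed.

Section FLsec.
Context {I : Type}.

Definition FL (Lam : (I -> R) -> R) : Prop :=
  exists (cs : list I) (B : R), 0 <= B /\ forall f g dl, 0 <= dl ->
    (forall c, In c cs -> Rabs (f c - g c) <= dl) -> Rabs (Lam f - Lam g) <= B * dl.

Lemma FL_ext Lam Lam' : (forall F, Lam F = Lam' F) -> FL Lam -> FL Lam'.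
Proof.
  intros H [cs [B [HB HL]]]. exists cs, B. split; auto. intros f g dl Hd Hc.
  rewrite <- !H. auto.
Qed.

Lemma FL_coord c : FL (fun F => F c).
Proof.
  exists (c :: nil), 1. split; [lra|]. intros f g dl Hd Hc. rewrite Rmult_1_l. apply Hc. left; auto.
Qed.

Lemma FL_const a : FL (fun _ => a).
Proof.
  exists nil, 0. split; [lra|]. intros. unfold Rminus. rewrite Rplus_opp_r, Rabs_R0. lra.
Qed.

Lemma FL_plus L1 L2 : FL L1 -> FL L2 -> FL (fun F => L1 F + L2 F).
Proof.
  intros [cs1 [B1 [HB1 H1]]] [cs2 [B2 [HB2 H2]]]. exists (cs1 ++ cs2), (B1 + B2). split; [lra|].
  intros f g dl Hd Hc.
  assert (A1 := H1 f g dl Hd (fun c Hi => Hc c (in_or_app _ _ _ (or_introl Hi)))).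
  assert (A2 := H2 f g dl Hd (fun c Hi => Hc c (in_or_app _ _ _ (or_intror Hi)))).
  replace (L1 f + L2 f - (L1 g + L2 g)) with ((L1 f - L1 g) + (L2 f - L2 g)) by ring.
  eapply Rle_trans; [apply Rabs_triang|]. lra.
Qed.

Lemma FL_scal a L1 : FL L1 -> FL (fun F => a * L1 F).
Proof.
  intros [cs [B [HB H]]]. exists cs, (Rabs a * B). split. apply Rmult_le_pos; auto; apply Rabs_pos.
  intros f g dl Hd Hc. replace (a * L1 f - a * L1 g) with (a * (L1 f - L1 g)) by ring.
  rewrite Rabs_mult. rewrite Rmult_assoc. apply Rmult_le_compat_l. apply Rabs_pos. auto.
Qed.

Lemma FL_minus L1 L2 : FL L1 -> FL L2 -> FL (fun F => L1 F - L2 F).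
Proof.
  intros H1 H2. apply FL_ext with (fun F => L1 F + (-1) * L2 F). intros; ring.
  apply FL_plus; auto. apply FL_scal; auto.
Qed.

Lemma FL_abs L1 : FL L1 -> FL (fun F => Rabs (L1 F)).
Proof.
  intros [cs [B [HB H]]]. exists cs, B. split; auto. intros f g dl Hd Hc.
  eapply Rle_trans; [apply Rabs_triang_inv2|]. auto.
Qed.

Lemma FL_sumL {X : Type} (Lx : X -> (I -> R) -> R) l :
  (forall x, In x l -> FL (Lx x)) -> FL (fun F => sumL (fun x => Lx x F) l).
Proof.
  induction l; intros H.
  - apply FL_ext with (fun _ => 0). intros; reflexivity. apply FL_const.
  - apply FL_ext with (fun F => Lx a F + sumL (fun x => Lx x F) l). intros; reflexivity.
    apply FL_plus. apply H; left; auto. apply IHl. intros; apply H; right; auto.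
Qed.

Definition CP (f : nat -> I -> R) (mu : I -> R) : Prop :=
  forall (cs : list I) (eps : R), 0 < eps -> forall N0 : nat,
    exists N : nat, (N0 <= N)%nat /\ forall c, In c cs -> Rabs (f N c - mu c) < eps.

Lemma FL_closure f mu Lam c N0 : CP f mu -> FL Lam ->
  (forall N, (N0 <= N)%nat -> Lam (f N) <= c) -> Lam mu <= c.
Proof.
  intros Hcp [cs [B [HB HL]]] Hb.
  destruct (Rle_dec (Lam mu) c) as [|Hn]; auto. exfalso.
  set (e := Lam mu - c). assert (He : 0 < e) by (unfold e; lra).
  set (dl := e / (2 * (B + 1))).
  assert (Hdl : 0 < dl) by (unfold dl; apply Rdiv_lt_0_compat; lra).
  destruct (Hcp cs dl Hdl N0) as [N [HN Hc]].
  assert (H1 := HL (f N) mu dl (Rlt_le _ _ Hdl) (fun c0 Hi => Rlt_le _ _ (Hc c0 Hi))).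
  assert (H2 := Hb N HN).
  assert (B * dl < e).
  { unfold dl. replace (B * (e / (2 * (B + 1)))) with (e * (B / (2 * (B + 1)))) by (field; lra).
    assert (B / (2 * (B + 1)) < 1). { apply Rmult_lt_reg_r with (2 * (B + 1)). lra.
      unfold Rdiv. rewrite Rmult_assoc, Rinv_l by lra. lra. }
    nra. }
  assert (Rabs (Lam (f N) - Lam mu) < e) by lra.
  apply Rabs_def2 in H0. unfold e in *. lra.
Qed.

Lemma FL_closure_eq f mu Lam v N0 : CP f mu -> FL Lam ->
  (forall N, (N0 <= N)%nat -> Lam (f N) = v) -> Lam mu = v.
Proof.
  intros Hcp HL Hb.
  assert (H : Rabs (Lam mu - v) <= 0).
  { apply (FL_closure f mu (fun F => Rabs (Lam F - v)) 0 N0 Hcp).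
    apply FL_abs, FL_minus; auto. apply FL_const.
    intros N HN. rewrite Hb by auto. unfold Rminus; rewrite Rplus_opp_r, Rabs_R0; lra. }
  pose proof (Rabs_pos (Lam mu - v)).
  assert (Rabs (Lam mu - v) = 0) by lra. destruct (Req_dec (Lam mu - v) 0) as [E0|E0]; [lra|]. apply Rabs_no_R0 in E0. lra.
Qed.
End FLsec.

Section Main.
Variables (G : Type) (eqG : forall x y : G, {x = y} + {x <> y})
  (eG : list G) (HeG : forall g : G, In g eG) (Hnd : NoDup eG)
  (A : nat -> Prop) (HApos : forall k, A k -> (0 < k)%nat)
  (theta : nat -> R)
  (Htheta_pos : forall k, A k -> 0 < theta k)
  (Htheta_out : forall k, ~ A k -> theta k = 0)
  (Htheta_sum : infinite_sum theta 1)
  (P : nat -> G -> G -> R)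
  (HP_nonneg : forall k i j, A k -> 0 <= P k i j)
  (HP_row : forall k i, A k -> sumL (fun j => P k i j) eG = 1)
  (HgcdA : isGcdSet A 1)
  (Hirr : Irreducible eqG eG A P)
  (i0 : G) (d : nat) (Hd : (1 < d)%nat)
  (Hper0 : forall s, returnDepths eqG eG A P i0 s -> Nat.divide d s).

Lemma words_S M : words eG (S M) = flat_map (fun w => map (fun g => g :: w) eG) (words eG M).
Proof. reflexivity. Qed.

Lemma In_words M w : In w (words eG M) <-> length w = M.
Proof.
  revert w; induction M; intros w; simpl.
  - split; [intros [<-|[]]; auto | destruct w; simpl; try discriminate; auto].
  - rewrite in_flat_map. split.
    + intros [u [Hu Hw]]. apply in_map_iff in Hw. destruct Hw as [g [<- _]].
      simpl. f_equal. apply IHM; auto.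
    + destruct w as [|g u]; simpl; [discriminate|]. intros H; injection H; intros.
      exists u; split; [apply IHM; auto|]. apply in_map_iff. exists g; auto.
Qed.

Lemma NoDup_words M : NoDup (words eG M).
Proof.
  induction M; simpl. constructor; [intros []|constructor].
  induction IHM as [|u l Hu Hl IH]; simpl. constructor.
  apply NoDup_app.
  - apply NoDup_map_NoDup_ForallPairs; auto. intros a b _ _ H; injection H; auto.
  - auto.
  - intros w Hw1 Hw2. apply in_map_iff in Hw1. destruct Hw1 as [g [<- _]].
    apply in_flat_map in Hw2. destruct Hw2 as [u' [Hu' Hw]]. apply in_map_iff in Hw.
    destruct Hw as [g' [E _]]. injection E; intros; subst. contradiction.
Qed.

Lemma sum_words_S M (f : list G -> R) :
  sumL f (words eG (S M)) = sumL (fun u => sumL (fun g => f (g :: u)) eG) (words eG M).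
Proof. rewrite words_S, sumL_flat_map. apply sumL_ext; intros u. rewrite sumL_map. reflexivity. Qed.

Lemma sum_words_0 (f : list G -> R) : sumL f (words eG 0) = f nil.
Proof. simpl. unfold sumL; simpl; lra. Qed.

Lemma sum_words_delta M (v : list G) (F : list G -> R) : length v = M ->
  sumL (fun w => (if list_eq_dec eqG v w then 1 else 0) * F w) (words eG M) = F v.
Proof.
  intros Hl. apply (sumL_delta (list_eq_dec eqG)). apply NoDup_words. apply In_words; auto.
Qed.

Lemma matw_app (x y : list nat) i j :
  matw eqG eG P (x ++ y) i j = sumL (fun h => matw eqG eG P y i h * matw eqG eG P x h j) eG.
Proof.
  revert i j; induction x as [|a x IH]; intros i j; simpl.
  - symmetry. rewrite (sumL_ext _ (fun h => (if eqG h j then 1 else 0) * matw eqG eG P y i h)).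
    apply sumL_delta'; auto. intros h; lra.
  - rewrite (sumL_ext _ (fun h => sumL (fun h' => matw eqG eG P y i h' * matw eqG eG P x h' h * P a h j) eG)).
    rewrite sumL_swap. apply sumL_ext; intros h'. rewrite <- sumL_scal_l. apply sumL_ext; intros h; lra.
    intros h. rewrite IH, <- sumL_scal_r. reflexivity.
Qed.

Lemma matw_nonneg (x : list nat) i j : Forall A x -> 0 <= matw eqG eG P x i j.
Proof.
  revert i j; induction x as [|a x IH]; intros i j HF; simpl.
  - destruct (eqG i j); lra.
  - inversion HF; subst. apply sumL_nonneg; intros h _.
    apply Rmult_le_pos; auto.
Qed.

Lemma matw_app_pos (x y : list nat) i h j : Forall A x -> Forall A y ->
  matw eqG eG P y i h > 0 -> matw eqG eG P x h j > 0 -> matw eqG eG P (x ++ y) i j > 0.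
Proof.
  intros Fx Fy H1 H2. rewrite matw_app.
  eapply Rlt_le_trans; [|apply (sumL_ge_term _ _ h)]; auto.
  apply Rmult_lt_0_compat; auto.
  intros h' _. apply Rmult_le_pos; apply matw_nonneg; auto.
Qed.

Lemma depth_app x y : depth (x ++ y) = (depth x + depth y)%nat.
Proof. induction x; simpl; auto. rewrite IHx; lia. Qed.

Definition aw (j : G) : list nat := proj1_sig (constructive_indefinite_description _ (Hirr i0 j)).
Lemma aw_spec j : isWord A (aw j) /\ matw eqG eG P (aw j) i0 j > 0.
Proof. unfold aw. destruct (constructive_indefinite_description _ _); simpl; auto. Qed.

Definition r (j : G) : Z := Z.of_nat (depth (aw j)).
Definition DZ : Z := Z.of_nat d.

Lemma ret_div (w : list nat) : isWord A w -> matw eqG eG P w i0 i0 > 0 -> Nat.divide d (depth w).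
Proof. intros. apply Hper0. exists w; auto. Qed.

Lemma natdiv_Z a b : Nat.divide a b -> Z.divide (Z.of_nat a) (Z.of_nat b).
Proof. intros [q ->]. exists (Z.of_nat q). lia. Qed.

Lemma phase_step k h g : A k -> P k h g > 0 -> Z.divide DZ (r g - r h - Z.of_nat k).
Proof.
  intros Ak Hp.
  destruct (Hirr g i0) as [b [[bne bF] Hb]].
  destruct (aw_spec h) as [[hne hF] Hh]. destruct (aw_spec g) as [[gne gF] Hg].
  assert (D1 : Nat.divide d (depth (b ++ k :: aw h))).
  { apply ret_div. split. destruct b; simpl; congruence. apply Forall_app; split; auto.
    apply matw_app_pos with g; auto.
    simpl. eapply Rlt_le_trans; [|apply (sumL_ge_term _ _ h)]; auto.
    apply Rmult_lt_0_compat; auto.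
    intros h' _. apply Rmult_le_pos; [apply matw_nonneg; auto| apply HP_nonneg; auto]. }
  assert (D2 : Nat.divide d (depth (b ++ aw g))).
  { apply ret_div. split. destruct b; simpl; congruence. apply Forall_app; split; auto.
    apply matw_app_pos with g; auto. }
  rewrite depth_app in D1, D2. simpl in D1.
  apply natdiv_Z in D1. apply natdiv_Z in D2.
  unfold r, DZ. 
  replace (Z.of_nat (depth (aw g)) - Z.of_nat (depth (aw h)) - Z.of_nat k)%Z with
    (Z.of_nat (depth b + depth (aw g)) - Z.of_nat (depth b + (k + depth (aw h))))%Z by lia.
  apply Z.divide_sub_r; auto.
Qed.

Definition Ok (rho : Z) : Prop := exists s, Z.divide DZ (r s - rho).

Lemma exists_pos_entry k s : A k -> exists g, P k s g > 0.
Proof.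
  intros Ak. destruct (sumL_nz_exists (fun j => P k s j) eG) as [g [_ Hg]].
  rewrite HP_row; auto; lra.
  exists g. specialize (HP_nonneg k s g Ak). lra.
Qed.

Lemma Ok_step rho k : Ok rho -> A k -> Ok (rho + Z.of_nat k).
Proof.
  intros [s Hs] Ak. destruct (exists_pos_entry k s Ak) as [g Hg].
  exists g. pose proof (phase_step k s g Ak Hg) as H.
  replace (r g - (rho + Z.of_nat k))%Z with ((r g - r s - Z.of_nat k) + (r s - rho))%Z by lia.
  apply Z.divide_add_r; auto.
Qed.

Lemma Ok_mod y z : Ok y -> Z.divide DZ (y - z) -> Ok z.
Proof.
  intros [s Hs] Hd'. exists s.
  replace (r s - z)%Z with ((r s - y) + (y - z))%Z by lia. apply Z.divide_add_r; auto.
Qed.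

Definition Sm (x : Z) : Prop := forall Q : Z -> Prop, Q 0%Z ->
  (forall y k, Q y -> A k -> Q (y + Z.of_nat k)%Z) ->
  (forall y z, Z.divide DZ (y - z) -> Q y -> Q z) -> Q x.

Lemma Sm_0 : Sm 0.
Proof. intros Q H0 _ _; auto. Qed.
Lemma Sm_step y k : Sm y -> A k -> Sm (y + Z.of_nat k).
Proof. intros Hy Ak Q H0 Hs Hm. apply Hs; [apply Hy|]; auto. Qed.
Lemma Sm_mod y z : Sm y -> Z.divide DZ (y - z) -> Sm z.
Proof. intros Hy Hd' Q H0 Hs Hm. apply Hm with y; [|apply Hy]; auto. Qed.

Lemma Sm_add x y : Sm x -> Sm y -> Sm (x + y).
Proof.
  intros Hx Hy. apply (Hy (fun y => Sm (x + y))).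
  - apply Sm_mod with x; auto. replace (x - (x + 0))%Z with 0%Z by lia. apply Z.divide_0_r.
  - intros y' k H Ak. apply Sm_mod with (x + y' + Z.of_nat k)%Z. apply Sm_step; auto.
    replace (x + y' + Z.of_nat k - (x + (y' + Z.of_nat k)))%Z with 0%Z by lia. apply Z.divide_0_r.
  - intros y' z H1 H2. apply Sm_mod with (x + y')%Z; auto.
    replace (x + y' - (x + z))%Z with (y' - z)%Z by lia. auto.
Qed.

Lemma Sm_nat_mul x n : Sm x -> Sm (Z.of_nat n * x).
Proof.
  intros Hx. induction n. simpl. apply Sm_0.
  replace (Z.of_nat (S n) * x)%Z with (Z.of_nat n * x + x)%Z by lia. apply Sm_add; auto.
Qed.

Lemma Sm_neg x : Sm x -> Sm (- x).
Proof.
  intros Hx. apply Sm_mod with (Z.of_nat (d - 1) * x)%Z. apply Sm_nat_mul; auto.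
  exists x. unfold DZ. rewrite Nat2Z.inj_sub by lia. lia.
Qed.

Lemma Sm_mulZ x z : Sm x -> Sm (z * x).
Proof.
  intros Hx. destruct (Z_le_gt_dec 0 z).
  - replace z with (Z.of_nat (Z.to_nat z)) by lia. apply Sm_nat_mul; auto.
  - replace (z * x)%Z with (- (Z.of_nat (Z.to_nat (- z)) * x))%Z by lia.
    apply Sm_neg, Sm_nat_mul; auto.
Qed.

Lemma Zdiv_nat a b : Z.divide (Z.of_nat a) (Z.of_nat b) -> Nat.divide a b.
Proof.
  intros [z Hz]. destruct (Nat.eq_dec a 0) as [->|Ha].
  - exists 0%nat. lia.
  - assert (0 <= z)%Z by nia. exists (Z.to_nat z). nia.
Qed.

Lemma Sm_all x : Sm x.
Proof.
  set (Pn := fun n => (0 < n)%nat /\ Sm (Z.of_nat n)).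
  assert (HPd : Pn d). { split. lia. apply Sm_mod with 0%Z. apply Sm_0. exists (-1)%Z. unfold DZ; lia. }
  destruct (dec_inh_nat_subset_has_unique_least_element Pn (fun n => classic (Pn n)) (ex_intro _ d HPd))
    as [e [[[He0 He] Hmin] _]].
  assert (Hdiv : forall y, Sm y -> Z.divide (Z.of_nat e) y).
  { intros y Hy. apply Z.mod_divide. lia.
    assert (Hb := Z.mod_pos_bound y (Z.of_nat e) ltac:(lia)).
    assert (Sm (y mod Z.of_nat e)).
    { rewrite Z.mod_eq by lia. replace (y - Z.of_nat e * (y / Z.of_nat e))%Z with
        (y + (- (y / Z.of_nat e)) * Z.of_nat e)%Z by lia. apply Sm_add; auto. apply Sm_mulZ; auto. }
    destruct (Z.eq_dec (y mod Z.of_nat e) 0) as [E|E]; auto.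
    assert (Pn (Z.to_nat (y mod Z.of_nat e))). { split. lia. rewrite Z2Nat.id by lia. auto. }
    apply Hmin in H0. lia. }
  assert (e = 1%nat).
  { destruct HgcdA as [_ H2]. apply Nat.divide_1_r. apply H2. intros k Ak.
    apply Zdiv_nat. apply Hdiv. replace (Z.of_nat k) with (0 + Z.of_nat k)%Z by lia. apply Sm_step; auto. apply Sm_0. }
  subst e. replace x with (x * Z.of_nat 1)%Z by lia. apply Sm_mulZ; auto.
Qed.

Lemma Ok_all rho : Ok rho.
Proof.
  assert (H := Sm_all (rho - r i0)). 
  assert (Ok (r i0 + (rho - r i0))).
  { apply (H (fun x => Ok (r i0 + x))).
    - exists i0. replace (r i0 - (r i0 + 0))%Z with 0%Z by lia. apply Z.divide_0_r.
    - intros y k Hy Ak. replace (r i0 + (y + Z.of_nat k))%Z with ((r i0 + y) + Z.of_nat k)%Z by lia.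
      apply Ok_step; auto.
    - intros y z Hyz Hy. apply Ok_mod with (r i0 + y)%Z; auto.
      replace (r i0 + y - (r i0 + z))%Z with (y - z)%Z by lia. auto. }
  replace rho with (r i0 + (rho - r i0))%Z by lia. auto.
Qed.

Definition bnd (c t : Z) : G := proj1_sig (constructive_indefinite_description _ (Ok_all (c + t))).
Lemma bnd_spec c t : Z.divide DZ (r (bnd c t) - c - t).
Proof.
  unfold bnd. destruct (constructive_indefinite_description _ _) as [s Hs]; simpl.
  replace (r s - c - t)%Z with (r s - (c + t))%Z by lia. auto.
Qed.

Definition upd (x : Z -> G) (t : Z) (g : G) : Z -> G := fun s => if Z.eq_dec s t then g else x s.
Definition dep (F : (Z -> G) -> R) (s : Z) : Prop :=
  forall x y, (forall t, (t < s)%Z -> x t = y t) -> F x = F y.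

Section Ex.
Variable q : (Z -> G) -> Z -> G -> R.
Hypothesis q_nonneg : forall x t g, 0 <= q x t g.
Hypothesis q_sum : forall x t, sumL (fun g => q x t g) eG = 1.

Fixpoint Hs (x : Z -> G) (t : Z) (u : list G) : R :=
  match u with nil => 1 | g :: u' => q x t g * Hs (upd x t g) (t + 1) u' end.
Fixpoint ext (x : Z -> G) (t : Z) (u : list G) : Z -> G :=
  match u with nil => x | g :: u' => ext (upd x t g) (t + 1) u' end.
Definition E (x : Z -> G) (t : Z) (M : nat) (F : (Z -> G) -> R) : R :=
  sumL (fun u => Hs x t u * F (ext x t u)) (words eG M).

Lemma E_0 x t F : E x t 0 F = F x.
Proof. unfold E. rewrite sum_words_0. simpl. lra. Qed.

Lemma E_S x t M F : E x t (S M) F = sumL (fun g => q x t g * E (upd x t g) (t + 1) M F) eG.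
Proof.
  unfold E. rewrite sum_words_S. rewrite sumL_swap. apply sumL_ext; intros g.
  rewrite <- sumL_scal_l. apply sumL_ext; intros u. simpl. lra.
Qed.

Lemma E_ext x t M F F' : (forall y, F y = F' y) -> E x t M F = E x t M F'.
Proof. intros H. unfold E. apply sumL_ext; intros u. rewrite H. reflexivity. Qed.

Lemma E_plus x t M F F' : E x t M (fun y => F y + F' y) = E x t M F + E x t M F'.
Proof. unfold E. rewrite <- sumL_plus. apply sumL_ext; intros; lra. Qed.

Lemma E_scal_r x t M F c : E x t M (fun y => F y * c) = E x t M F * c.
Proof. unfold E. rewrite <- sumL_scal_r. apply sumL_ext; intros; lra. Qed.

Lemma E_scal_l x t M F c : E x t M (fun y => c * F y) = c * E x t M F.
Proof. unfold E. rewrite <- sumL_scal_l. apply sumL_ext; intros; lra. Qed.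

Lemma E_sumL {Y : Type} x t M (F : Y -> (Z -> G) -> R) l :
  E x t M (fun y => sumL (fun w => F w y) l) = sumL (fun w => E x t M (F w)) l.
Proof.
  unfold E. rewrite (sumL_ext _ (fun u => sumL (fun w => Hs x t u * F w (ext x t u)) l)).
  apply sumL_swap. intros u. rewrite <- sumL_scal_l. reflexivity.
Qed.

Lemma Hs_nonneg x t u : 0 <= Hs x t u.
Proof. revert x t; induction u; intros; simpl; [lra|]. apply Rmult_le_pos; auto. Qed.

Lemma E_le x t M F F' : (forall y, F y <= F' y) -> E x t M F <= E x t M F'.
Proof. intros H. unfold E. apply sumL_le; intros u _. apply Rmult_le_compat_l; auto. apply Hs_nonneg. Qed.

Lemma E_nonneg x t M F : (forall y, 0 <= F y) -> 0 <= E x t M F.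
Proof. intros H. unfold E. apply sumL_nonneg; intros u _. apply Rmult_le_pos; auto. apply Hs_nonneg. Qed.

Lemma E_one x t M : E x t M (fun _ => 1) = 1.
Proof.
  revert x t; induction M; intros. rewrite E_0; auto.
  rewrite E_S. rewrite (sumL_ext _ (fun g => q x t g)). auto. intros g; rewrite IHM; lra.
Qed.

Lemma E_last M x t Psi : E x t (S M) Psi =
  E x t M (fun y => sumL (fun g => q y (t + Z.of_nat M) g * Psi (upd y (t + Z.of_nat M) g)) eG).
Proof.
  revert x t Psi; induction M; intros.
  - rewrite E_S, E_0. rewrite Z.add_0_r. apply sumL_ext; intros g. rewrite E_0. reflexivity.
  - rewrite E_S, (E_S x t M). apply sumL_ext; intros g. rewrite IHM.
    f_equal. apply E_ext; intros y. replace (t + 1 + Z.of_nat M)%Z with (t + Z.of_nat (S M))%Z by lia.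
    reflexivity.
Qed.

Lemma upd_at y s g : upd y s g s = g.
Proof. unfold upd. destruct (Z.eq_dec s s); [auto|lia]. Qed.

Lemma upd_agree y s g : forall t', (t' < s)%Z -> upd y s g t' = y t'.
Proof. intros t' H. unfold upd. destruct (Z.eq_dec t' s); [lia|auto]. Qed.

Lemma E_indep M x t Psi : dep Psi (t + Z.of_nat M) -> E x t (S M) Psi = E x t M Psi.
Proof.
  intros Hd'. rewrite E_last. apply E_ext; intros y.
  rewrite (sumL_ext _ (fun g => q y (t + Z.of_nat M) g * Psi y)).
  rewrite sumL_scal_r, q_sum. lra.
  intros g. f_equal. apply Hd'. apply upd_agree.
Qed.

Lemma dep_mono F s s' : (s <= s')%Z -> dep F s -> dep F s'.
Proof. intros H Hd' x y Hxy. apply Hd'. intros; apply Hxy; lia. Qed.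

Lemma E_mono M M' x t Psi : dep Psi (t + Z.of_nat M) -> (M <= M')%nat -> E x t M' Psi = E x t M Psi.
Proof.
  intros Hd' Hle. induction Hle; auto.
  rewrite E_indep; auto. apply dep_mono with (t + Z.of_nat M)%Z; auto. lia.
Qed.

Lemma E_cond M x t Phi g0 : dep Phi (t + Z.of_nat M) ->
  E x t (S M) (fun y => Phi y * (if eqG (y (t + Z.of_nat M)%Z) g0 then 1 else 0)) =
  E x t M (fun y => q y (t + Z.of_nat M) g0 * Phi y).
Proof.
  intros Hd'. rewrite E_last. apply E_ext; intros y.
  rewrite (sumL_ext _ (fun g => (if eqG g g0 then 1 else 0) * (q y (t + Z.of_nat M) g * Phi y))).
  exact (sumL_delta' eqG eG g0 (fun g => q y (t + Z.of_nat M) g * Phi y) Hnd (HeG g0)).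
  intros g. rewrite upd_at.
  rewrite (Hd' (upd y (t + Z.of_nat M) g) y) by apply upd_agree.
  destruct (eqG g g0); lra.
Qed.
End Ex.

Fixpoint win (x : Z -> G) (m : Z) (n : nat) : list G :=
  match n with O => nil | S n' => x m :: win x (m + 1) n' end.

Lemma win_length x m n : length (win x m n) = n.
Proof. revert m; induction n; intros; simpl; auto. Qed.

Lemma win_app x m a b : win x m (a + b) = win x m a ++ win x (m + Z.of_nat a) b.
Proof.
  revert m; induction a; intros; simpl. rewrite Z.add_0_r; auto.
  rewrite IHa. do 3 f_equal. lia.
Qed.

Lemma win_snoc x m n : win x m (S n) = win x m n ++ x (m + Z.of_nat n)%Z :: nil.
Proof. replace (S n) with (n + 1)%nat by lia. rewrite win_app. reflexivity. Qed.

Lemma win_agree x y m n : (forall t, (m <= t < m + Z.of_nat n)%Z -> x t = y t) -> win x m n = win y m n.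
Proof.
  revert m; induction n; intros m H; simpl; auto. rewrite H by lia. f_equal. apply IHn.
  intros; apply H; lia.
Qed.

Lemma nth_error_win x m n i : (i < n)%nat -> nth_error (win x m n) i = Some (x (m + Z.of_nat i)%Z).
Proof.
  revert m i; induction n; intros m i H; [lia|]. destruct i; simpl. rewrite Z.add_0_r; auto.
  rewrite IHn by lia. do 2 f_equal. lia.
Qed.

Lemma skipn_len_app {X : Type} (l1 l2 : list X) : skipn (length l1) (l1 ++ l2) = l2.
Proof. induction l1; simpl; auto. Qed.
Lemma firstn_len_app {X : Type} (l1 l2 : list X) : firstn (length l1) (l1 ++ l2) = l1.
Proof. induction l1; simpl; auto. f_equal; auto. Qed.

Definition indw (x : Z -> G) (m : Z) (w : list G) : R :=
  if list_eq_dec eqG (win x m (length w)) w then 1 else 0.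

Lemma indw_bounds x m w : 0 <= indw x m w <= 1.
Proof. unfold indw. destruct (list_eq_dec eqG _ _); lra. Qed.

Lemma dep_indw m w : dep (fun x => indw x m w) (m + Z.of_nat (length w)).
Proof. intros x y H. unfold indw. rewrite (win_agree x y); auto. intros; apply H; lia. Qed.

Lemma indw_nil x m : indw x m nil = 1.
Proof. unfold indw. simpl. reflexivity. Qed.

Lemma indw_snoc x m w g : indw x m (w ++ g :: nil) =
  indw x m w * (if eqG (x (m + Z.of_nat (length w))%Z) g then 1 else 0).
Proof.
  unfold indw. rewrite length_app. simpl. replace (length w + 1)%nat with (S (length w)) by lia.
  rewrite win_snoc. destruct (list_eq_dec eqG (win x m (length w)) w) as [E1|E1];
  destruct (eqG (x (m + Z.of_nat (length w))%Z) g) as [E2|E2].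
  - rewrite E1, E2. lazymatch goal with |- context [list_eq_dec eqG ?a ?b] => destruct (list_eq_dec eqG a b); [lra|congruence] end.
  - lazymatch goal with |- context [list_eq_dec eqG ?a ?b] => destruct (list_eq_dec eqG a b) as [E3|] end; [|lra]. apply app_inj_tail in E3. destruct E3; congruence.
  - lazymatch goal with |- context [list_eq_dec eqG ?a ?b] => destruct (list_eq_dec eqG a b) as [E3|] end; [|lra]. apply app_inj_tail in E3. destruct E3; congruence.
  - lazymatch goal with |- context [list_eq_dec eqG ?a ?b] => destruct (list_eq_dec eqG a b) as [E3|] end; [|lra]. apply app_inj_tail in E3. destruct E3; congruence.
Qed.

Lemma indw_cons x m w g : indw x (m - 1) (g :: w) =
  (if eqG (x (m - 1)%Z) g then 1 else 0) * indw x m w.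
Proof.
  unfold indw. cbn [win length]. replace (m - 1 + 1)%Z with m by lia.
  destruct (list_eq_dec eqG (win x m (length w)) w) as [E1|E1];
  destruct (eqG (x (m - 1)%Z) g) as [E2|E2].
  - rewrite E1, E2. lazymatch goal with |- context [list_eq_dec eqG ?a ?b] => destruct (list_eq_dec eqG a b); [lra|congruence] end.
  - lazymatch goal with |- context [list_eq_dec eqG ?a ?b] => destruct (list_eq_dec eqG a b) as [E3|] end; [|lra]. injection E3; intros; congruence.
  - lazymatch goal with |- context [list_eq_dec eqG ?a ?b] => destruct (list_eq_dec eqG a b) as [E3|] end; [|lra]. injection E3; intros; congruence.
  - lazymatch goal with |- context [list_eq_dec eqG ?a ?b] => destruct (list_eq_dec eqG a b) as [E3|] end; [|lra]. injection E3; intros; congruence.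
Qed.

Lemma sum_ind_eq (a : G) : sumL (fun g => if eqG a g then 1 else 0) eG = 1.
Proof.
  rewrite (sumL_ext _ (fun g => (if eqG a g then 1 else 0) * (fun _ => 1) g)).
  apply (sumL_delta eqG); auto. intros; lra.
Qed.

Lemma theta_nonneg k : 0 <= theta k.
Proof. destruct (classic (A k)). left; auto. rewrite Htheta_out; auto; lra. Qed.

Lemma theta0 : theta 0 = 0.
Proof. apply Htheta_out. intros H. apply HApos in H. lia. Qed.

Lemma sumL_theta_mono n m : (n <= m)%nat -> sumL theta (seq 0 n) <= sumL theta (seq 0 m).
Proof.
  intros H. replace m with (n + (m - n))%nat by lia. rewrite seq_app, sumL_app.
  assert (0 <= sumL theta (seq (0 + n) (m - n))) by (apply sumL_nonneg; intros; apply theta_nonneg). lra.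
Qed.

Lemma sumL_theta_le1 n : sumL theta (seq 0 n) <= 1.
Proof.
  destruct (Rle_dec (sumL theta (seq 0 n)) 1) as [H|H]; auto. exfalso.
  destruct (Htheta_sum (sumL theta (seq 0 n) - 1)) as [K HK]. lra.
  specialize (HK (max K n) ltac:(lia)). rewrite <- sumL_seq_f_R0 in HK.
  assert (sumL theta (seq 0 n) <= sumL theta (seq 0 (S (max K n)))) by (apply sumL_theta_mono; lia).
  unfold Rdist in HK. rewrite Rabs_right in HK by lra. lra.
Qed.

Definition tailN (N : nat) : R := 1 - sumL theta (seq 0 N).
Lemma tailN_nonneg N : 0 <= tailN N.
Proof. unfold tailN. pose proof (sumL_theta_le1 N). lra. Qed.

Definition qN (c : Z) (N : nat) (x : Z -> G) (t : Z) (g : G) : R :=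
  sumL (fun k => theta k * P k (x (t - Z.of_nat k)%Z) g) (seq 0 N) +
  tailN N * (if eqG (bnd c t) g then 1 else 0).

Lemma thetaP_nonneg k h g : 0 <= theta k * P k h g.
Proof.
  destruct (classic (A k)). apply Rmult_le_pos; [apply theta_nonneg|auto].
  rewrite Htheta_out; auto; lra.
Qed.

Lemma qN_nonneg c N x t g : 0 <= qN c N x t g.
Proof.
  unfold qN. apply Rplus_le_le_0_compat. apply sumL_nonneg; intros; apply thetaP_nonneg.
  apply Rmult_le_pos. apply tailN_nonneg. destruct (eqG _ _); lra.
Qed.

Lemma qN_sum c N x t : sumL (fun g => qN c N x t g) eG = 1.
Proof.
  unfold qN. rewrite sumL_plus. rewrite sumL_scal_l, sum_ind_eq.
  rewrite sumL_swap. rewrite (sumL_ext _ theta). unfold tailN; lra.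
  intros k. rewrite sumL_scal_l. destruct (classic (A k)). rewrite HP_row; auto; lra.
  rewrite Htheta_out; auto; lra.
Qed.

Definition muN (c : Z) (N : nat) (m : Z) (w : list G) : R :=
  E (qN c N) (bnd c) (- Z.of_nat N) (Z.to_nat (m + Z.of_nat (length w) + Z.of_nat N)) (fun x => indw x m w).

Lemma muN_eq c N m w M : (m + Z.of_nat (length w) <= - Z.of_nat N + Z.of_nat M)%Z ->
  muN c N m w = E (qN c N) (bnd c) (- Z.of_nat N) M (fun x => indw x m w).
Proof.
  intros H. unfold muN. symmetry. apply E_mono.
  - apply qN_sum.
  - apply dep_mono with (m + Z.of_nat (length w))%Z; [lia|apply dep_indw].
  - lia.
Qed.

Lemma muN_law c N : IsLaw eG (muN c N).
Proof.
  split; [|split; [|split]].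
  - intros m. unfold muN. rewrite (E_ext _ _ _ _ _ (fun _ => 1)). apply E_one. apply qN_sum.
    intros; apply indw_nil.
  - intros m w. unfold muN. apply E_nonneg. apply qN_nonneg. intros; apply indw_bounds.
  - intros m w. set (M := Z.to_nat (m + Z.of_nat (length w) + 1 + Z.of_nat N)).
    rewrite (sumL_ext _ (fun g => E (qN c N) (bnd c) (- Z.of_nat N) M (fun x => indw x m (w ++ g :: nil)))).
    rewrite (muN_eq c N m w M) by lia. rewrite <- E_sumL. apply E_ext; intros y.
    rewrite (sumL_ext _ (fun g => indw y m w * (if eqG (y (m + Z.of_nat (length w))%Z) g then 1 else 0))).
    rewrite sumL_scal_l, sum_ind_eq; lra.
    intros; apply indw_snoc.
    intros g. apply muN_eq. rewrite length_app; simpl. lia.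
  - intros m w. set (M := Z.to_nat (m + Z.of_nat (length w) + Z.of_nat N)).
    rewrite (sumL_ext _ (fun g => E (qN c N) (bnd c) (- Z.of_nat N) M (fun x => indw x (m - 1) (g :: w)))).
    rewrite (muN_eq c N m w M) by lia. rewrite <- E_sumL. apply E_ext; intros y.
    rewrite (sumL_ext _ (fun g => (if eqG (y (m - 1)%Z) g then 1 else 0) * indw y m w)).
    rewrite sumL_scal_r, sum_ind_eq; lra.
    intros; apply indw_cons.
    intros g. apply muN_eq. simpl. lia.
Qed.

Lemma muN_bounds c N m w : 0 <= muN c N m w <= 1.
Proof.
  unfold muN. split. apply E_nonneg. apply qN_nonneg. intros; apply indw_bounds.
  rewrite <- (E_one (qN c N) (qN_sum c N) (bnd c) (- Z.of_nat N) (Z.to_nat (m + Z.of_nat (length w) + Z.of_nat N))).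
  apply E_le. apply qN_nonneg. intros; apply indw_bounds.
Qed.

Lemma expect_muN c N m M f Mb : (m + Z.of_nat M <= - Z.of_nat N + Z.of_nat Mb)%Z ->
  expect eG (muN c N) m M f = E (qN c N) (bnd c) (- Z.of_nat N) Mb (fun x => f (win x m M)).
Proof.
  intros H. unfold expect.
  rewrite (sumL_ext_in _ (fun w => E (qN c N) (bnd c) (- Z.of_nat N) Mb (fun x => indw x m w * f w))).
  - rewrite <- E_sumL. apply E_ext; intros y.
    rewrite (sumL_ext_in _ (fun w => (if list_eq_dec eqG (win y m M) w then 1 else 0) * f w)).
    apply sum_words_delta. apply win_length.
    intros w Hw. apply In_words in Hw. unfold indw. rewrite Hw. reflexivity.
  - intros w Hw. apply In_words in Hw. rewrite (muN_eq c N m w Mb) by lia.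
    rewrite E_scal_r. reflexivity.
Qed.

Definition Ph (c : Z) (x : Z -> G) : Prop := forall t, Z.divide DZ (r (x t) - c - t).

Lemma Ph_bnd c : Ph c (bnd c).
Proof. intros t; apply bnd_spec. Qed.

Lemma qN_phase c N x t g : Ph c x -> qN c N x t g <> 0 -> Z.divide DZ (r g - c - t).
Proof.
  intros Hx Hq. unfold qN in Hq. destruct (eqG (bnd c t) g) as [<-|Hn].
  - apply bnd_spec.
  - rewrite Rmult_0_r, Rplus_0_r in Hq. apply sumL_nz_exists in Hq.
    destruct Hq as [k [_ Hk]].
    destruct (classic (A k)) as [Ak|nAk]; [|rewrite Htheta_out in Hk; auto; lra].
    assert (Hp : P k (x (t - Z.of_nat k)%Z) g > 0).
    { pose proof (HP_nonneg k (x (t - Z.of_nat k)%Z) g Ak). destruct H; auto.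
      rewrite <- H in Hk; lra. }
    pose proof (phase_step k _ _ Ak Hp) as H1. pose proof (Hx (t - Z.of_nat k)%Z) as H2.
    replace (r g - c - t)%Z with ((r g - r (x (t - Z.of_nat k)%Z) - Z.of_nat k) +
      (r (x (t - Z.of_nat k)%Z) - c - (t - Z.of_nat k)))%Z by lia.
    apply Z.divide_add_r; auto.
Qed.

Lemma Hs_phase c N u : forall x t, Ph c x -> Hs (qN c N) x t u <> 0 -> Ph c (ext x t u).
Proof.
  induction u as [|g u IH]; intros x t Hx Hh; simpl in *; auto.
  apply IH.
  - intros t'. unfold upd. destruct (Z.eq_dec t' t) as [->|]; auto.
    apply (qN_phase c N x t g Hx). intros E0; rewrite E0 in Hh; lra.
  - intros E0; rewrite E0 in Hh; lra.
Qed.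

Lemma muN_phase c N m g : ~ Z.divide DZ (r g - c - m) -> muN c N m (g :: nil) = 0.
Proof.
  intros Hg. unfold muN, E. rewrite (sumL_ext _ (fun _ => 0)). apply sumL_zero.
  intros u. destruct (Req_dec (Hs (qN c N) (bnd c) (- Z.of_nat N) u) 0) as [E0|E0].
  rewrite E0; lra.
  pose proof (Hs_phase c N u _ _ (Ph_bnd c) E0 m) as Hm.
  unfold indw. cbn [win length]. 
  lazymatch goal with |- context [list_eq_dec eqG ?a ?b] => destruct (list_eq_dec eqG a b) as [E3|] end; [|lra].
  injection E3; intros E4. rewrite E4 in Hm. contradiction.
Qed.

Definition aT (mu : Z -> list G -> R) (n : Z) (L : nat) (bb : list G -> bool) (g : G) (k : nat) : R :=
  theta k * sumL (fun h => P k h g * expect eG mu (n - Z.of_nat (L + k))%Z (L + k)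
           (fun w => Defs.ind (bb (skipn k w)) * isAt eqG w L h)) eG.
Definition rT (mu : Z -> list G -> R) (n : Z) (L : nat) (bb : list G -> bool) (g : G) : R :=
  expect eG mu (n - Z.of_nat L)%Z (L + 1) (fun w => Defs.ind (bb (firstn L w)) * isAt eqG w L g).

Lemma ind_bounds b : 0 <= Defs.ind b <= 1.
Proof. unfold Defs.ind; destruct b; lra. Qed.

Lemma P_le1 k h g : A k -> P k h g <= 1.
Proof. intros Ak. rewrite <- (HP_row k h Ak). apply (sumL_ge_term (fun j => P k h j)); auto. Qed.

Section Approx.
Variables (c : Z) (N : nat) (n : Z) (L : nat) (bb : list G -> bool) (g : G).
Hypothesis Hn : (- Z.of_nat N <= n)%Z.
Let M0 := Z.to_nat (n + Z.of_nat N).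
Let Phi := fun x => Defs.ind (bb (win x (n - Z.of_nat L) L)).
Let EE := E (qN c N) (bnd c) (- Z.of_nat N).

Lemma M0_eq : (- Z.of_nat N + Z.of_nat M0 = n)%Z.
Proof. unfold M0. lia. Qed.

Lemma dep_Phi : dep Phi n.
Proof. intros x y H. unfold Phi. rewrite (win_agree x y); auto. intros; apply H; lia. Qed.

Lemma aT_eq k : aT (muN c N) n L bb g k = theta k * EE M0 (fun y => P k (y (n - Z.of_nat k)%Z) g * Phi y).
Proof.
  destruct k as [|k']. unfold aT. rewrite theta0. lra.
  unfold aT. f_equal.
  rewrite (sumL_ext _ (fun h => P (S k') h g * EE M0 (fun x => Phi x * (if eqG (x (n - Z.of_nat (S k'))%Z) h then 1 else 0)))).
  - rewrite (sumL_ext _ (fun h => EE M0 (fun x => P (S k') h g * (Phi x * (if eqG (x (n - Z.of_nat (S k'))%Z) h then 1 else 0))))).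
    2: intros; unfold EE; rewrite E_scal_l; reflexivity.
    unfold EE. rewrite <- E_sumL. apply E_ext; intros y.
    rewrite (sumL_ext _ (fun h => (if eqG h (y (n - Z.of_nat (S k'))%Z) then 1 else 0) * (P (S k') h g * Phi y))).
    exact (sumL_delta' eqG eG (y (n - Z.of_nat (S k'))%Z) (fun h => P (S k') h g * Phi y) Hnd (HeG _)).
    intros h. destruct (eqG (y (n - Z.of_nat (S k'))%Z) h), (eqG h (y (n - Z.of_nat (S k'))%Z)); subst; try congruence; lra.
  - intros h. f_equal. unfold EE. rewrite (expect_muN c N _ _ _ M0) by (pose proof M0_eq; lia).
    apply E_ext; intros x. unfold Phi.
    rewrite Nat.add_comm at 2. rewrite win_app.
    rewrite <- (win_length x (n - Z.of_nat (L + S k')) (S k')) at 1. rewrite skipn_len_app.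
    replace (n - Z.of_nat (L + S k') + Z.of_nat (S k'))%Z with (n - Z.of_nat L)%Z by lia.
    f_equal. unfold isAt. rewrite nth_error_win by lia.
    replace (n - Z.of_nat (L + S k') + Z.of_nat L)%Z with (n - Z.of_nat (S k'))%Z by lia. reflexivity.
Qed.

Lemma aT_bounds k : 0 <= aT (muN c N) n L bb g k <= theta k.
Proof.
  rewrite aT_eq. destruct (classic (A k)) as [Ak|nAk].
  - assert (0 <= EE M0 (fun y => P k (y (n - Z.of_nat k)%Z) g * Phi y) <= 1).
    { unfold EE. split. apply E_nonneg. apply qN_nonneg. intros y. apply Rmult_le_pos; auto. apply ind_bounds.
      rewrite <- (E_one (qN c N) (qN_sum c N) (bnd c) (- Z.of_nat N) M0).
      apply E_le. apply qN_nonneg. intros y. pose proof (P_le1 k (y (n - Z.of_nat k)%Z) g Ak).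
      pose proof (HP_nonneg k (y (n - Z.of_nat k)%Z) g Ak). pose proof (ind_bounds (bb (win y (n - Z.of_nat L) L))).
      unfold Phi. nra. }
    pose proof (theta_nonneg k). nra.
  - rewrite Htheta_out; auto. lra.
Qed.

Lemma rT_eq : exists cst, 0 <= cst <= 1 /\
  rT (muN c N) n L bb g = sumL (aT (muN c N) n L bb g) (seq 0 N) + tailN N * cst.
Proof.
  exists ((if eqG (bnd c n) g then 1 else 0) * EE M0 Phi). split.
  - assert (0 <= EE M0 Phi <= 1).
    { unfold EE. split. apply E_nonneg. apply qN_nonneg. intros y. apply ind_bounds.
      rewrite <- (E_one (qN c N) (qN_sum c N) (bnd c) (- Z.of_nat N) M0).
      apply E_le. apply qN_nonneg. intros y. apply ind_bounds. }
    destruct (eqG _ _); nra.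
  - unfold rT. rewrite (expect_muN c N _ _ _ (S M0)) by (pose proof M0_eq; lia).
    rewrite (E_ext _ _ _ _ _ (fun x => Phi x * (if eqG (x (- Z.of_nat N + Z.of_nat M0)%Z) g then 1 else 0))).
    + rewrite (E_cond (qN c N)); [|rewrite M0_eq; apply dep_Phi].
      rewrite M0_eq.
      rewrite (E_ext _ _ _ _ _ (fun y => sumL (fun k => theta k * (P k (y (n - Z.of_nat k)%Z) g * Phi y)) (seq 0 N) +
           (tailN N * (if eqG (bnd c n) g then 1 else 0)) * Phi y)).
      rewrite E_plus, E_sumL, E_scal_l. f_equal.
      apply sumL_ext; intros k. rewrite aT_eq. unfold EE. rewrite E_scal_l. reflexivity.
      unfold EE; ring.
      intros y. unfold qN. rewrite Rmult_plus_distr_r, <- sumL_scal_r. f_equal. apply sumL_ext; intros; lra.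
    + intros x. rewrite M0_eq. unfold Phi. replace (L + 1)%nat with (S L) by lia. rewrite win_snoc.
      set (w0 := win x (n - Z.of_nat L) L). assert (Hl : length w0 = L) by apply win_length.
      replace (firstn L (w0 ++ x (n - Z.of_nat L + Z.of_nat L)%Z :: nil)) with w0
        by (rewrite <- Hl at 1; symmetry; apply firstn_len_app).
      f_equal. unfold isAt. rewrite nth_error_app2 by lia. rewrite Hl, Nat.sub_diag.
      simpl. replace (n - Z.of_nat L + Z.of_nat L)%Z with n by lia. reflexivity.
Qed.
End Approx.

Lemma approx_bound c N n L bb g K : (- Z.of_nat N <= n)%Z -> (S K <= N)%nat ->
  Rabs (sumL (aT (muN c N) n L bb g) (seq 0 (S K)) - rT (muN c N) n L bb g) <= 1 - sumL theta (seq 0 (S K)).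
Proof.
  intros Hn HK. destruct (rT_eq c N n L bb g Hn) as [cst [Hc Heq]]. rewrite Heq.
  replace (seq 0 N) with (seq 0 (S K + (N - S K))) by (f_equal; lia).
  rewrite !seq_app, !sumL_app. simpl (0 + S K)%nat.
  assert (B1 : sumL (aT (muN c N) n L bb g) (seq (S K) (N - S K)) <= sumL theta (seq (S K) (N - S K))).
  { apply sumL_le. intros k _. apply aT_bounds; auto. }
  assert (B0 : 0 <= sumL (aT (muN c N) n L bb g) (seq (S K) (N - S K))).
  { apply sumL_nonneg. intros k _. apply aT_bounds; auto. }
  pose proof (tailN_nonneg N) as T0.
  unfold tailN in *. replace (seq 0 N) with (seq 0 (S K + (N - S K))) in * by (f_equal; lia).
  rewrite !seq_app, !sumL_app in *. simpl (0 + S K)%nat in *.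
  rewrite Rabs_left1 by nra. nra.
Qed.

Lemma FL_expect (m : Z) (M : nat) (f : list G -> R) :
  FL (fun F : Z * list G -> R => expect eG (fun m' w => F (m', w)) m M f).
Proof.
  unfold expect. apply FL_sumL. intros w _. apply FL_ext with (fun F => f w * F (m, w)). intros; ring.
  apply FL_scal, FL_coord.
Qed.

Lemma FL_aT n L bb g k : FL (fun F : Z * list G -> R => aT (fun m w => F (m, w)) n L bb g k).
Proof.
  unfold aT. apply FL_scal. apply FL_sumL; intros h _. apply FL_scal. apply FL_expect.
Qed.

Lemma FL_rT n L bb g : FL (fun F : Z * list G -> R => rT (fun m w => F (m, w)) n L bb g).
Proof. unfold rT. apply FL_expect. Qed.

Lemma limit_law c : exists mu : Z -> list G -> R, IsLaw eG mu /\ Compatible eqG eG theta P mu /\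
  (forall m g, ~ Z.divide DZ (r g - c - m) -> mu m (g :: nil) = 0).
Proof.
  destruct (CluOuter.CluM.cluster_exists (Z * list G) (fun N p => muN c N (fst p) (snd p))) as [F HF].
  { intros N p. apply muN_bounds. }
  set (f := fun N (p : Z * list G) => muN c N (fst p) (snd p)).
  assert (Hcp : CP f F) by exact HF.
  exists (fun m w => F (m, w)).
  split; [|split].
  - split; [|split; [|split]].
    + intros m. apply (FL_closure_eq f F (fun F => F (m, nil)) 1 0 Hcp (FL_coord _)).
      intros N _. unfold f; simpl. destruct (muN_law c N) as [H _]. apply H.
    + intros m w. assert (- F (m, w) <= 0); [|lra].
      apply (FL_closure f F (fun F => - F (m, w)) 0 0 Hcp).
      apply FL_ext with (fun F => (-1) * F (m, w)). intros; ring. apply FL_scal, FL_coord.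
      intros N _. unfold f; simpl. destruct (muN_law c N) as [_ [H _]]. specialize (H m w). lra.
    + intros m w. assert (sumL (fun g => F (m, w ++ g :: nil)) eG - F (m, w) = 0); [|lra].
      apply (FL_closure_eq f F (fun F => sumL (fun g => F (m, w ++ g :: nil)) eG - F (m, w)) 0 0 Hcp).
      apply FL_minus. apply FL_sumL; intros; apply FL_coord. apply FL_coord.
      intros N _. unfold f; simpl. destruct (muN_law c N) as [_ [_ [H _]]]. rewrite (H m w). lra.
    + intros m w. assert (sumL (fun g => F ((m - 1)%Z, g :: w)) eG - F (m, w) = 0); [|lra].
      apply (FL_closure_eq f F (fun F => sumL (fun g => F ((m - 1)%Z, g :: w)) eG - F (m, w)) 0 0 Hcp).
      apply FL_minus. apply FL_sumL; intros; apply FL_coord. apply FL_coord.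
      intros N _. unfold f; simpl. destruct (muN_law c N) as [_ [_ [_ H]]]. rewrite (H m w). lra.
  - intros n L bb g.
    change (infinite_sum (aT (fun m w => F (m, w)) n L bb g) (rT (fun m w => F (m, w)) n L bb g)).
    intros eps Heps. destruct (Htheta_sum eps Heps) as [K0 HK0]. exists K0. intros K HK.
    rewrite <- sumL_seq_f_R0. unfold Rdist.
    assert (Hb : Rabs (sumL (fun k => aT (fun m w => F (m, w)) n L bb g k) (seq 0 (S K)) -
                        rT (fun m w => F (m, w)) n L bb g) <= 1 - sumL theta (seq 0 (S K))).
    { apply (FL_closure f F (fun F => Rabs (sumL (fun k => aT (fun m w => F (m, w)) n L bb g k) (seq 0 (S K)) -
                        rT (fun m w => F (m, w)) n L bb g)) _ (max (S K) (Z.to_nat (- n))) Hcp).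
      - apply FL_abs, FL_minus. apply FL_sumL; intros; apply FL_aT. apply FL_rT.
      - intros N HN. exact (approx_bound c N n L bb g K ltac:(lia) ltac:(lia)). }
    specialize (HK0 K HK). rewrite <- sumL_seq_f_R0 in HK0. unfold Rdist in HK0.
    pose proof (sumL_theta_le1 (S K)).
    rewrite Rabs_left1 in HK0 by lra. 
    eapply Rle_lt_trans; [exact Hb|]. lra.
  - intros m g Hg.
    apply (FL_closure_eq f F (fun F => F (m, g :: nil)) 0 0 Hcp (FL_coord _)).
    intros N _. unfold f; simpl. apply muN_phase; auto.
Qed.

Lemma main_concl : exists mu1 mu2 : Z -> list G -> R,
    IsLaw eG mu1 /\ IsLaw eG mu2 /\
    Compatible eqG eG theta P mu1 /\ Compatible eqG eG theta P mu2 /\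
    exists (m : Z) (w : list G), mu1 m w <> mu2 m w.
Proof.
  destruct (limit_law 0) as [mu1 [L1 [C1 P1]]]. destruct (limit_law 1) as [mu2 [L2 [C2 P2]]].
  exists mu1, mu2. split; [auto|split; [auto|split; [auto|split; [auto|]]]].
  exists 0%Z. destruct L1 as [La [Lb [Lc Ld]]].
  assert (Hs := Lc 0%Z nil). rewrite (La 0%Z) in Hs.
  destruct (sumL_nz_exists _ _ ltac:(rewrite Hs; lra)) as [g [_ Hg]]. simpl in Hg.
  exists (g :: nil). intros Heq.
  assert (D0 : Z.divide DZ (r g - 0 - 0)) by (apply NNPP; intros Hn; apply Hg; apply P1; auto).
  assert (D1 : Z.divide DZ (r g - 1 - 0)) by (apply NNPP; intros Hn; apply Hg; rewrite Heq; apply P2; auto).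
  assert (H : Z.divide DZ 1) by (replace 1%Z with ((r g - 0 - 0) - (r g - 1 - 0))%Z by lia; apply Z.divide_sub_r; auto).
  apply Z.divide_1_r in H. unfold DZ in H. lia.
Qed.
End Main.

Theorem mainTheorem5
  (G : Type) (eqG : forall x y : G, {x = y} + {x <> y})
  (eG : list G) (HeG : forall g : G, In g eG) (Hnd : NoDup eG)
  (Hne : eG <> nil)
  (A : nat -> Prop) (HApos : forall k, A k -> (0 < k)%nat)
  (theta : nat -> R)
  (Htheta_pos : forall k, A k -> 0 < theta k)
  (Htheta_out : forall k, ~ A k -> theta k = 0)
  (Htheta_sum : infinite_sum theta 1)
  (P : nat -> G -> G -> R)
  (HP_nonneg : forall k i j, A k -> 0 <= P k i j)
  (HP_row : forall k i, A k -> sumL (fun j => P k i j) eG = 1)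
  (HgcdA : isGcdSet A 1)
  (Hirr : Irreducible eqG eG A P)
  (Hper : exists dhat : nat, (1 < dhat)%nat /\
            forall i : G, isPeriod eqG eG A P i dhat) :
  exists mu1 mu2 : Z -> list G -> R,
    IsLaw eG mu1 /\ IsLaw eG mu2 /\
    Compatible eqG eG theta P mu1 /\ Compatible eqG eG theta P mu2 /\
    exists (m : Z) (w : list G), mu1 m w <> mu2 m w.
Proof.
  assert (Hi0 : exists i0 : G, True) by (destruct eG as [|i0 l]; [congruence| exists i0; auto]).
  destruct Hi0 as [i0 _]. destruct Hper as [d [Hd Hperd]].
  exact (main_concl G eqG eG HeG Hnd A HApos theta Htheta_pos Htheta_out Htheta_sum P HP_nonneg HP_row
           HgcdA Hirr i0 d Hd (fun s Hs => proj1 (Hperd i0) s Hs)).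
Qed.
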